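(* Let $m,n\in\mathbb{N}$, let $\alpha\in\mathbb{Z}_n$ and let $f:\mathbb{Z}_n\to\mathbb{C}$ be given by $f(x)=\widehat f(\alpha)\chi_{\alpha}(x)$ (a $1$-sparse function). Let $\ell:=\min(n,m)$ and let $g:\mathbb{Z}_m\to\mathbb{C}$ be defined by $g(x)=f(x)$ for $0\le x<\ell$ and $g(x)=0$ otherwise. If $\beta\in\mathbb{Z}_m$ satisfies $\beta=\frac mn\alpha$, then $|\widehat g(\beta)|=\frac\ell m|\widehat f(\alpha)|$. For all $\beta\in\mathbb{Z}_m$ with $\beta\neq\frac mn\alpha$, \[|\widehat g(\beta)|\le|\widehat f(\alpha)|\min\Big(\frac\ell m,\ \frac{1}{2|\frac mn\alpha-\beta|_m}\Big).\] Moreover, if $\beta=\lfloor\frac mn\alpha\rceil$ (taken in $\mathbb{Z}_m$), then \[|\widehat g(\beta)|\ge|\widehat f(\alpha)|\max\Big(\frac{2\ell}{\pi m},\ \frac\ell m\sqrt{1-\frac{\pi^2\ell^2}{3m^2}\Big|\frac mn\alpha-\beta\Big|_m^2}\Big).\]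
   Context: $\mathbb{Z}_n=\{0,\dots,n-1\}$ with addition mod $n$; elements are treated as these integer representatives. $\chi_\alpha(x)=\exp(2\pi i\alpha x/n)$ on $\mathbb{Z}_n$; for $h:\mathbb{Z}_m\to\mathbb{C}$, $\widehat h(\beta)=\frac1m\sum_{x\in\mathbb{Z}_m}h(x)\exp(-2\pi i\beta x/m)$. $\lfloor x\rceil$ denotes the integer nearest to $x\in\mathbb{R}$. For $k\in\mathbb{N}$ and $x\in\mathbb{R}$, $|x|_k=\min\{|x-kz|:z\in\mathbb{Z}\}$. *)

(* Defs.v *)
From mathcomp Require Import all_boot all_algebra.
From mathcomp Require Import all_classical all_reals all_analysis.
From mathcomp Require Export complex.
Set Implicit Arguments. Unset Strict Implicit. Unset Printing Implicit Defensive.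
Import GRing.Theory Num.Theory.
Local Open Scope ring_scope.
Local Open Scope classical_set_scope.
Local Open Scope complex_scope.

Definition expi (R : realType) (t : R) : R[i] := (cos t +i* sin t)%C.

(* chi_a(x) = exp(2 pi i a x / n) on Z_n (elements as representatives 0..n-1) *)
Definition chi (R : realType) (n a x : nat) : R[i] :=
  expi (2 * pi * a%:R * x%:R / n%:R).

(* hat h(b) = 1/m sum_{x in Z_m} h(x) exp(-2 pi i b x / m); h : Z_m -> C is given
   as a function on nat of which only the values at 0..m-1 are used. *)
Definition dft (R : realType) (m : nat) (h : nat -> R[i]) (b : nat) : R[i] :=
  ((m%:R : R)^-1)%:C * \sum_(x < m) h x * expi (- (2 * pi * b%:R * x%:R / m%:R)).

Definition zdist (R : realType) (k : nat) (x : R) : R :=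
  inf [set `|x - k%:R * z%:~R| | z in [set: int]].

(* nearest integer, ties rounded up *)
Definition nearest (R : realType) (x : R) : int := Num.floor (x + 2^-1).

Definition cmod (R : realType) (z : R[i]) : R := ComplexField.Normc.normc z.

(* Main.v *)
Require Import Defs.
From mathcomp Require Import all_boot all_algebra.
From mathcomp Require Import all_classical all_reals all_analysis.
From mathcomp Require Import complex.
From mathcomp Require Import lra ring.
Import order.Order.TTheory GRing.Theory Num.Theory.
Local Open Scope ring_scope.
Section S.
Variable R : realType.

Lemma deriv_le (f df : R -> R) (a b : R) : a <= b ->
  (forall x : R, is_derive x (1:R) f (df x)) -> (forall x, a <= x <= b -> 0 <= df x) ->
  f a <= f b.
Proof.
move=> ab fd dfp.
have [|c] := MVT_segment ab (fun x _ => fd x).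
  by apply: derivable_within_continuous => x _; exact: ex_derive.
rewrite in_itv /= => cab e.
by rewrite -subr_ge0 e mulr_ge0 ?dfp // subr_ge0.
Qed.

Arguments deriv_le {f df a b}.

Lemma sin_le_id (x : R) : 0 <= x -> sin x <= x.
Proof.
move=> x0.
have D y : is_derive y (1:R) (id - sin : R -> R) (1 - cos y).
  by apply: is_derive_eq.
have := deriv_le x0 D.
rewrite !fctE /= sin0 subr0 subr_ge0; apply.
by move=> y _; rewrite subr_ge0 cos_le1.
Qed.

Lemma cos_ge (x : R) : 0 <= x -> 1 - 2^-1 * x ^+ 2 <= cos x.
Proof.
move=> x0.
have D y : is_derive y (1:R) (cos + (fun y => 2^-1 * y ^+ 2) : R -> R) (- sin y + y).
  apply: is_derive_eq. rewrite /GRing.scale/= !mulr1. field; rewrite ?pnatr_eq0 //.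
have := deriv_le x0 D.
rewrite !fctE /= cos0 expr0n /= mulr0 addr0 -lerBlDr; apply.
by move=> y /andP[y0 _]; rewrite addrC subr_ge0 sin_le_id.
Qed.

Lemma sin_ge (x : R) : 0 <= x -> x - 6^-1 * x ^+ 3 <= sin x.
Proof.
move=> x0.
have D y : is_derive y (1:R) (sin - id + (fun y => 6^-1 * y ^+ 3) : R -> R) (cos y - 1 + 2^-1 * y^+2).
  apply: is_derive_eq. rewrite /GRing.scale/= !mulr1. field; rewrite ?pnatr_eq0 //.
have := deriv_le x0 D.
rewrite !fctE /= sin0 expr0n /= mulr0 subrr addr0 => h.
suff : 0 <= sin x - x + 6^-1 * x ^+ 3 by lra.
apply: h.
move=> y /andP[y0 _]; have := @cos_ge y y0; lra.
Qed.

Lemma jordan (x : R) : 0 <= x <= pi / 2 -> 2 * x / pi <= sin x.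
Proof.
move=> /andP[x0 xp].
have pi0 := pi_gt0 R.
set g := (sin - (fun y => 2 / pi * y)) : R -> R.
set dg := fun y : R => cos y - 2 / pi.
have gd (y : R) : is_derive y (1:R) g (dg y).
  rewrite /g /dg; apply: is_derive_eq. rewrite /GRing.scale/= !mulr1 //.
suff : 0 <= g x by rewrite /g /= subr_ge0 mulrAC.
suff : 0 <= g x by rewrite /g !fctE /= subr_ge0 mulrAC.
move: x0; rewrite le_eqVlt => /predU1P[<-|xpos].
  by rewrite /g !fctE /= sin0 mulr0 subrr.
move: xp; rewrite le_eqVlt => /predU1P[->|xlt].
  rewrite /g !fctE /= sin_pihalf [2 / pi * _](_ : _ = 1) ?subrr //.
  by rewrite mulrA divfK ?gt_eqF // divff // pnatr_eq0.
have [|c1 c1i e1] := MVT xpos (fun z _ => gd z).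
  by apply: derivable_within_continuous => z _; exact: ex_derive.
have [|c2 c2i e2] := MVT xlt (fun z _ => gd z).
  by apply: derivable_within_continuous => z _; exact: ex_derive.
move: c1i c2i; rewrite !in_itv /= => /andP[c10 c1x] /andP[c2x c2p].
have g0 : g 0 = 0 by rewrite /g !fctE /= sin0 mulr0 subrr.
have gp : g (pi / 2) = 0.
  rewrite /g !fctE /= sin_pihalf [2 / pi * _](_ : _ = 1) ?subrr //.
  by rewrite mulrA divfK ?gt_eqF // divff // pnatr_eq0.
rewrite g0 subr0 in e1; rewrite gp in e2.
have hd : dg c2 <= dg c1.
  rewrite /dg lerD2r; apply: ltW.
  have hpi : pi / 2 <= pi :> R. have := pi_gt0 R. lra.
  rewrite ltr_cos // ?in_itv /=; try (apply/andP; split; lra).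
  lra.
have h1 : dg c2 * (pi/2 - x) * x <= dg c1 * (pi/2 - x) * x.
  by rewrite ler_wpM2r ?(ltW xpos) // ler_wpM2r // subr_ge0 ltW.
rewrite -e2 -mulrA [(_ - x) * x]mulrC mulrA -(subr0 x) -e1 subr0 in h1.
have h2 : 0 <= g x * (pi / 2) by lra.
by rewrite pmulr_lge0 // in h2; rewrite divr_gt0.
Qed.
Local Notation C := R[i].

Lemma expiD (a b : R) : expi (a + b) = expi a * expi b.
Proof.
rewrite /expi cosD sinD; apply/eqP; rewrite eq_complex /=.
by apply/andP; split; apply/eqP; ring.
Qed.

Lemma expi0 : expi (0:R) = 1.
Proof. by rewrite /expi cos0 sin0. Qed.

Lemma cmod_expi (y : R) : cmod (expi y) = 1.
Proof. by rewrite /cmod /expi /= cos2Dsin2 sqrtr1. Qed.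

Lemma cmod_expi1 (y : R) : cmod (expi y - 1) = 2 * `|sin (y / 2)|.
Proof.
rewrite /cmod /expi /=.
set h := y / 2.
have -> : y = h *+ 2 by rewrite /h -mulr_natr; field; rewrite ?pnatr_eq0.
rewrite sin_mulr2n cos_mulr2n subr0.
set c := cos h; set s := sin h.
have -> : (c ^+ 2 *+ 2 - 1 - 1) ^+ 2 + ((c * s) *+ 2) ^+ 2 =
   (2 * s) ^+ 2 + 4 * (c^+2 + s^+2 - 1) * (c^+2 + s^+2 - 1 - s^+2) by ring.
rewrite /c /s cos2Dsin2 subrr mulr0 mul0r addr0 sqrtr_sqr normrM.
by rewrite ger0_norm.
Qed.

Definition S (l : nat) (p : R) : C := \sum_(x < l) expi (p * x%:R).

Lemma geom l p : (expi p - 1) * S l p = expi (p * l%:R) - 1.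
Proof.
rewrite /S; elim: l => [|l IH]; first by rewrite big_ord0 mulr0 mulr0 expi0 subrr.
rewrite big_ord_recr /= mulrDr IH.
have -> : p * l.+1%:R = p * l%:R + p by rewrite -addn1 natrD mulrDr mulr1.
rewrite expiD; ring.
Qed.

Lemma cmod_sum_le l (F : nat -> C) : cmod (\sum_(x < l) F x) <= \sum_(x < l) cmod (F x).
Proof.
elim: l => [|l IH]; first by rewrite !big_ord0 /cmod ComplexField.Normc.normc0.
rewrite !big_ord_recr /=; apply: le_trans (le_normcD _ _) _.
by rewrite lerD2r.
Qed.

Lemma cmod_S_le l p : cmod (S l p) <= l%:R.
Proof.
rewrite /S; apply: le_trans (cmod_sum_le l (fun x => expi (p * x%:R))) _.
under eq_bigr do rewrite cmod_expi.
by rewrite sumr_const card_ord.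
Qed.

Lemma expi_pern (z : R) (n : nat) : expi (z + 2 * pi * n%:R) = expi z.
Proof.
have -> : 2 * pi * n%:R = (pi *+ 2) *+ n :> R by ring.
by rewrite /expi (periodicn (@cosD2pi R)) (periodicn (@sinD2pi R)).
Qed.

Lemma expi_per (z : R) (k : int) : expi (z + 2 * pi * k%:~R) = expi z.
Proof.
case: k => n; first by rewrite expi_pern.
rewrite -(expi_pern (z + 2 * pi * (Negz n)%:~R) n.+1); congr expi.
rewrite NegzE mulrNz; rewrite [(Posz _)%:~R]/intmul /=; ring.
Qed.
Lemma zdist_eq (m : nat) (u : R) (k : int) : (0 < m)%N -> `|u| <= m%:R / 2 ->
  zdist m (u + m%:R * k%:~R) = `|u|.
Proof.
move=> m0 um.
have lb : forall z : int, `|u| <= `|u + m%:R * k%:~R - m%:R * z%:~R|.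
  move=> z.
  have -> : u + m%:R * k%:~R - m%:R * z%:~R = u + m%:R * (k - z)%:~R.
    by rewrite intrB; ring.
  have [->|wn0] := eqVneq (k - z) 0; first by rewrite mulr0 addr0.
  have h1 : 1 <= `|(k - z)%:~R : R|.
    by apply: norm_intr_ge1; [exact: intr_int | rewrite intr_eq0].
  have h2 : `|m%:R * (k - z)%:~R| <= `|u + m%:R * (k - z)%:~R| + `|u|.
    have := ler_normB (u + m%:R * (k - z)%:~R) u.
    by rewrite addrC addKr.
  rewrite normrM ger0_norm ?ler0n // in h2.
  have h3 : m%:R <= m%:R * `|(k - z)%:~R : R|.
    by rewrite ler_peMr ?ler0n.
  lra.
rewrite /zdist; apply/le_anti/andP; split.
  have : lbound [set `|u + m%:R * k%:~R - m%:R * z%:~R| | z in [set: int]]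
     (inf [set `|u + m%:R * k%:~R - m%:R * z%:~R| | z in [set: int]]).
    apply: ge_inf; exists `|u|; by move=> y [z _ <-].
  by apply; exists k => //; rewrite addrK.
apply: lb_le_inf; first by eexists; exists 0.
by move=> y [z _ <-].
Qed.

Lemma cmod_real (r : R) : cmod (r%:C)%C = `|r|.
Proof. by rewrite /cmod /= expr0n /= addr0 sqrtr_sqr. Qed.

Lemma cmodM (x y : C) : cmod (x * y) = cmod x * cmod y.
Proof. exact: ComplexField.Normc.normcM. Qed.

Lemma cmod_ge0 (z : C) : 0 <= cmod z.
Proof. by case: z => a b; rewrite /cmod /= sqrtr_ge0. Qed.

Lemma norm_sin (a : R) : `|a| <= pi -> `|sin a| = sin `|a|.
Proof.
case: (lerP 0 a) => a0 h.
  by rewrite !ger0_norm // sin_ge0_pi // a0 -(ger0_norm a0).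
have sp : 0 <= sin (- a) by apply: sin_ge0_pi; rewrite oppr_ge0 (ltW a0) -(ltr0_norm a0) h.
by rewrite (ltr0_norm a0) -{1}(opprK a) sinN normrN ger0_norm.
Qed.

Lemma S_sin l (m : nat) (u : R) : (0 < m)%N ->
  `|sin (pi * u / m%:R)| * cmod (S l (2 * pi * u / m%:R)) = `|sin (pi * u / m%:R * l%:R)|.
Proof.
move=> m0.
have := congr1 (@cmod R) (geom l (2 * pi * u / m%:R)).
rewrite {1}/cmod ComplexField.Normc.normcM -/(cmod _) -/(cmod _) !cmod_expi1.
have -> : 2 * pi * u / m%:R / 2 = pi * u / m%:R by field; rewrite pnatr_eq0 -lt0n m0.
have -> : 2 * pi * u / m%:R * l%:R / 2 = pi * u / m%:R * l%:R.
  by field; rewrite pnatr_eq0 -lt0n m0.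
have h2 : (2:R) != 0 by rewrite pnatr_eq0.
move=> H; apply: (mulfI h2); rewrite mulrA; exact: H.
Qed.

Lemma S_upper l (m : nat) (u : R) : (0 < m)%N -> `|u| <= m%:R / 2 -> u != 0 ->
  cmod (S l (2 * pi * u / m%:R)) <= m%:R / (2 * `|u|).
Proof.
move=> m0 um u0.
have M0 : 0 < m%:R :> R by rewrite ltr0n.
have pi0 := pi_gt0 R.
have U0 : 0 < `|u| by rewrite normr_gt0.
have hA : `|pi * u / m%:R| = pi * `|u| / m%:R.
  by rewrite !normrM normfV (gtr0_norm pi0) (gtr0_norm M0).
have Ale : pi * `|u| / m%:R <= pi / 2.
  rewrite ler_pdivrMr // -mulrA ler_pM2l //; lra.
have hs := @S_sin l m u m0.
have np : `|pi * u / m%:R| <= pi by rewrite hA; lra.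
rewrite norm_sin // hA in hs.
have hj : 2 * (pi * `|u| / m%:R) / pi <= sin (pi * `|u| / m%:R).
  apply: jordan; rewrite Ale andbT; apply: divr_ge0; last exact: ltW.
  by rewrite mulr_ge0 // ltW.
have e : 2 * (pi * `|u| / m%:R) / pi = 2 * `|u| / m%:R.
  move: (lt0r_neq0 pi0) (lt0r_neq0 M0); move: (pi : R) (m%:R : R) => p M p0 M0'.
  by field; rewrite p0 M0'.
rewrite e in hj.
have h1 : cmod (S l (2 * pi * u / m%:R)) * (2 * `|u| / m%:R) <= 1.
  apply: le_trans; first by apply: ler_wpM2l; [exact: cmod_ge0 | exact: hj].
  by rewrite mulrC hs; apply: sin_max.
rewrite mulrA ler_pdivrMr // mul1r in h1.
by rewrite ler_pdivlMr ?mulr_gt0.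
Qed.

Lemma S0 l : S l 0 = l%:R.
Proof.
rewrite /S; under eq_bigr do rewrite mul0r expi0.
by rewrite sumr_const card_ord.
Qed.

Lemma cmod_nat l : cmod (l%:R : C) = l%:R.
Proof. by rewrite /cmod normcMn ComplexField.Normc.normc1. Qed.

Lemma S_lower l (m : nat) (u : R) : (0 < m)%N -> (l <= m)%N -> `|u| <= 2^-1 ->
  2 * l%:R / pi <= cmod (S l (2 * pi * u / m%:R)) /\
  l%:R * Num.sqrt (1 - pi ^+ 2 * l%:R ^+ 2 / (3 * m%:R ^+ 2) * `|u| ^+ 2)
    <= cmod (S l (2 * pi * u / m%:R)).
Proof.
move=> m0 lm uh.
have M0 : 0 < m%:R :> R by rewrite ltr0n.
have pi0 := pi_gt0 R.
have pi2 := pi_ge2 R.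
have pi4 := pihalf_lt2 R.
have L0 : 0 <= l%:R :> R by [].
have LM : l%:R <= m%:R :> R by rewrite ler_nat.
have [->|u0] := eqVneq u 0.
  rewrite mulr0 mul0r S0 cmod_nat normr0 expr0n /= mulr0 subr0 sqrtr1 mulr1.
  split => //.
  rewrite ler_pdivrMr //; nra.
have U0 : 0 < `|u| by rewrite normr_gt0.
set A := pi * `|u| / m%:R.
have A0 : 0 < A by rewrite /A divr_gt0 // mulr_gt0.
have hA : `|pi * u / m%:R| = A.
  by rewrite !normrM normfV (gtr0_norm pi0) (gtr0_norm M0).
have AL : A * l%:R <= pi / 2.
  rewrite /A mulrAC ler_pdivrMr // -!mulrA ler_pM2l //.
  have : `|u| * l%:R <= 2^-1 * m%:R by apply: ler_pM => //; exact: normr_ge0.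
  lra.
have AL0 : 0 <= A * l%:R by rewrite mulr_ge0 // ltW.
have hs := @S_sin l m u m0.
have M1 : 1 <= m%:R :> R by rewrite ler1n.
have Ale : A <= pi / 2.
  rewrite /A ler_pdivrMr // -mulrA ler_pM2l //; lra.
have np : `|pi * u / m%:R| <= pi by rewrite hA; lra.
have hAl : `|pi * u / m%:R * l%:R| = A * l%:R.
  by rewrite normrM hA ger0_norm.
have npl : `|pi * u / m%:R * l%:R| <= pi by rewrite hAl; lra.
rewrite norm_sin // norm_sin // hA hAl in hs.
have sA : 0 < sin A by apply: sin_gt0_pi; rewrite A0 /=; lra.
have sAle := @sin_le_id A (ltW A0).
split.
  rewrite -(ler_pM2r sA) [X in _ <= X]mulrC hs.
  apply: (le_trans _ (@jordan (A * l%:R) _)); last by rewrite AL0 AL.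
  have : 2 * l%:R / pi * sin A <= 2 * l%:R / pi * A.
    by apply: ler_wpM2l => //; rewrite divr_ge0 ?mulr_ge0 // ltW.
  move=> h; apply: (le_trans h); rewrite le_eqVlt; apply/orP; left; apply/eqP.
  move: (lt0r_neq0 pi0); move: (pi : R) => p p0.
  by field.
set B := A * l%:R.
have e1 : pi ^+ 2 * l%:R ^+ 2 / (3 * m%:R ^+ 2) * `|u| ^+ 2 = B ^+ 2 / 3.
  rewrite /B /A; move: (lt0r_neq0 M0); move: (pi : R) (m%:R : R) => p M M0'.
  by field; rewrite M0'.
rewrite e1.
have B2 : B < 2 by apply: le_lt_trans AL pi4.
have hB : B * B <= 2 * 2 by apply: ler_pM => //; apply: ltW.
have Y0 : 0 <= 1 - B ^+ 2 / 6 by rewrite expr2; lra.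
have step1 : l%:R * (1 - B ^+ 2 / 6) <= cmod (S l (2 * pi * u / m%:R)).
  rewrite -(ler_pM2r sA) [X in _ <= X]mulrC hs.
  apply: le_trans (@sin_ge B AL0).
  apply: le_trans; first by apply: ler_wpM2l; [rewrite mulr_ge0 | exact: sAle].
  rewrite le_eqVlt; apply/orP; left; apply/eqP; rewrite /B; ring.
apply: le_trans step1; apply: ler_wpM2l => //.
have : Num.sqrt (1 - B ^+ 2 / 3) <= Num.sqrt ((1 - B ^+ 2 / 6) ^+ 2).
  apply: ler_wsqrtr; nra.
by rewrite sqrtr_sqr ger0_norm.
Qed.

Lemma S_shift l (m : nat) (u : R) (k : int) : (0 < m)%N ->
  S l (2 * pi * (u + m%:R * k%:~R) / m%:R) = S l (2 * pi * u / m%:R).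
Proof.
move=> m0; rewrite /S; apply: eq_bigr => i _.
rewrite -[RHS](expi_per _ (k * (i : nat)%:Z)); congr expi.
rewrite intrM -pmulrn.
move: (lt0r_neq0 (pi_gt0 R)); move: (pi : R) => p p0.
by field; rewrite pnatr_eq0 -lt0n m0.
Qed.
Lemma aux1 (p M a : R) : p != 0 -> M != 0 -> a / (p * M) = M^-1 * (a / p).
Proof. by move=> p0 M0; field; rewrite p0 M0. Qed.
End S.
Arguments aux1 {R}.
Arguments S {R}.
Arguments expiD {R}.
Arguments cmod_ge0 {R}.
Arguments cmodM {R}.
Arguments cmod_real {R}.
Arguments S0 {R}.
Arguments cmod_nat {R}.
Arguments cmod_S_le {R}.
Arguments S_shift {R}.
Arguments zdist_eq {R}.

Theorem lemma3p1 (R : realType) (m n alpha : nat) (f : nat -> R[i]) :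
  (0 < m)%N -> (alpha < n)%N ->
  (forall x : nat, (x < n)%N -> f x = dft n f alpha * chi R n alpha x) ->
  let l := minn n m in
  let g := fun x : nat => if (x < l)%N then f x else 0 in
  let c := cmod (dft n f alpha) in
  let t : R := m%:R / n%:R * alpha%:R in
  (forall beta : nat, (beta < m)%N -> beta%:R = t ->
     cmod (dft m g beta) = l%:R / m%:R * c) /\
  (forall beta : nat, (beta < m)%N -> beta%:R != t ->
     cmod (dft m g beta) <=
       c * Num.min (l%:R / m%:R) (1 / (2 * zdist m (t - beta%:R)))) /\
  (forall beta : nat, (beta < m)%N -> beta%:Z = (nearest t %% m%:Z)%Z ->
     c * Num.max (2 * l%:R / (pi * m%:R))
                 (l%:R / m%:R * Num.sqrt (1 - pi ^+ 2 * l%:R ^+ 2 / (3 * m%:R ^+ 2)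
                                              * zdist m (t - beta%:R) ^+ 2))
       <= cmod (dft m g beta)).
Proof.
move=> m0 an hf l g c t.
set d := dft n f alpha.
have n0 : (0 < n)%N by apply: leq_ltn_trans an.
have M0 : 0 < m%:R :> R by rewrite ltr0n.
have N0 : 0 < n%:R :> R by rewrite ltr0n.
have lm : (l <= m)%N by rewrite geq_minr.
have ln : (l <= n)%N by rewrite geq_minl.
have c0 : 0 <= c by apply: cmod_ge0.
have key beta : dft m g beta =
    (((m%:R : R)^-1)%:C)%C * d * S l (2 * pi * (t - beta%:R) / m%:R).
  rewrite /dft -[RHS]mulrA; congr (_ * _).
  have -> : \sum_(x < m) g x * expi (- (2 * pi * beta%:R * x%:R / m%:R)) =
            \sum_(x < l) f x * expi (- (2 * pi * beta%:R * x%:R / m%:R)).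
    rewrite (big_ord_widen _ (fun x => f x * expi (- (2 * pi * beta%:R * x%:R / m%:R))) lm).
    rewrite [RHS]big_mkcond /=; apply: eq_bigr => i _; rewrite /g.
    by case: ifP => _ //; rewrite mul0r.
  rewrite /S mulr_sumr; apply: eq_bigr => i _.
  rewrite hf; last by apply: leq_trans (ltn_ord i) ln.
  rewrite /chi -mulrA -expiD; congr (_ * expi _).
  rewrite /t; move: (pi : R) => p.
  by field; rewrite !pnatr_eq0 -!lt0n m0 n0.
have ckey beta : cmod (dft m g beta) =
    c / m%:R * cmod (S l (2 * pi * (t - beta%:R) / m%:R)).
  rewrite key cmodM cmodM cmod_real -/c.
  by rewrite ger0_norm ?invr_ge0 ?ltW // [_^-1 * _]mulrC.
have t0 : 0 <= t by rewrite /t mulr_ge0 ?divr_ge0 ?ler0n.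
have tm : t < m%:R.
  by rewrite /t mulrAC ltr_pdivrMr // ltr_pM2l // ltr_nat.
split.
  move=> beta bm bt.
  rewrite ckey bt subrr mulr0 mul0r S0 cmod_nat.
  ring.
split.
  move=> beta bm bt.
  set y := t - beta%:R.
  set k := Num.floor (y / m%:R + 2^-1).
  set u := y - m%:R * k%:~R.
  have k1 := floor_le (y / m%:R + 2^-1).
  have k2 := floorD1_gt (y / m%:R + 2^-1).
  rewrite -/k intrD in k2.
  have hu : `|u| <= m%:R / 2.
    have k1' : m%:R * k%:~R <= y + m%:R / 2.
      rewrite -ler_pdivlMl // mulrDr mulrA mulVf ?mul1r ?gt_eqF //.
      by rewrite [_ * y]mulrC.
    have k2' : y + m%:R / 2 < m%:R * k%:~R + m%:R.
      have := k2; rewrite -(ltr_pM2l M0) mulrDr mulrDr mulr1.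
      by rewrite mulrCA mulfV ?gt_eqF // mulr1 [_ * 2^-1]mulrC.
    rewrite ler_norml /u; apply/andP; split; lra.
  have yE : y = u + m%:R * k%:~R by rewrite /u subrK.
  have zE : zdist m y = `|u| by rewrite yE zdist_eq.
  have u0 : u != 0.
    apply/negP => /eqP u0; move: yE; rewrite u0 add0r => yE.
    have [k0|kn0] := eqVneq k 0.
      by move: bt; rewrite eq_sym -subr_eq0 -/y yE k0 mulr0 eqxx.
    have h1 : 1 <= `|k%:~R : R| by apply: norm_intr_ge1; [exact: intr_int | rewrite intr_eq0].
    have h2 : `|y| < m%:R.
      have b0 : 0 <= beta%:R :> R by [].
      have bm' : beta%:R < m%:R :> R by rewrite ltr_nat.
      rewrite ltr_norml /y; apply/andP; split; lra.
    move: h2; rewrite yE normrM (ger0_norm (ltW M0)) => h2.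
    have : m%:R * 1 <= m%:R * `|k%:~R : R| by rewrite ler_pM2l.
    lra.
  rewrite ckey -/y zE yE S_shift //.
  have X0 := cmod_ge0 (S l (2 * pi * u / m%:R)).
  have Xl := cmod_S_le l (2 * pi * u / m%:R).
  have Xu := @S_upper R l m u m0 hu u0.
  rewrite -mulrA ler_wpM2l // le_min; apply/andP; split.
    by rewrite mulrC ler_pM2r ?invr_gt0 // ler_nat.
  rewrite mulrC ler_pdivrMr // mul1r.
  by rewrite [_ * m%:R]mulrC.
move=> beta bm bE.
set N := nearest t.
have NE : N = Num.floor (t + 2^-1) by [].
have k1 := floor_le (t + 2^-1).
have k2 := floorD1_gt (t + 2^-1).
rewrite -NE in k1 k2; rewrite intrD in k2.
set u := t - N%:~R.
have hu : `|u| <= 2^-1 by rewrite ler_norml /u; apply/andP; split; lra.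
set k := (N %/ m%:Z)%Z.
have e : (N %% m%:Z)%Z = N - k * m%:Z.
  by apply/eqP; rewrite eq_sym subr_eq addrC; apply/eqP; exact: divz_eq.
have bR : beta%:R = (N - k * m%:Z)%:~R :> R by rewrite -e -bE.
have yE : t - beta%:R = u + m%:R * k%:~R by rewrite bR intrB intrM /u; ring.
have M1 : 1 <= m%:R :> R by rewrite ler1n.
have hu' : `|u| <= m%:R / 2 by lra.
rewrite ckey yE zdist_eq // S_shift //.
have [L1 L2] := @S_lower R l m u m0 lm hu.
set X := cmod (S l _).
set Q := Num.sqrt _.
rewrite -[c / _ * _]mulrA; apply: ler_wpM2l => //; rewrite ge_max; apply/andP; split.
  rewrite aux1 ?(lt0r_neq0 (pi_gt0 R)) ?(lt0r_neq0 M0) //.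
  by rewrite ler_pM2l ?invr_gt0.
have -> : l%:R / m%:R * Q = m%:R^-1 * (l%:R * Q) by ring.
by rewrite ler_pM2l ?invr_gt0.
Qed.
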